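(* Let $\lambda\ge0$ and $J_\lambda(\theta)=\lambda\theta-(\lambda-1)\frac{1-F(\theta)}{f(\theta)}$, and assume $J_\lambda$ is nondecreasing on $\Theta$. Then for every $\theta_0\in[0,\bar\theta)$, the function $s(\theta)=F(\theta)$ on $[\theta_0,\bar\theta]$ maximizes $\int_{\theta_0}^{\bar\theta}J_\lambda(\theta)s(\theta)\,dF(\theta)$ over $s\in\mathcal S(\theta_0)$. Consequently, with the participation cutoff $\theta_0$ fixed and the cutoff type's payoff fixed (as it is under the nonnegative-price constraint), the social welfare $W_S=\int_{\theta_0}^{\bar\theta}(\lambda p(\theta)+U(\theta))\,dF(\theta)$ is maximized by full separation of participants.
   Context: Let $0<\bar\theta<\infty$, $\Theta=[0,\bar\theta]$, $F$ a cdf on $\Theta$ with continuous, strictly positive density $f$, $dF=f\,d\theta$. For $\theta_0\in[0,\bar\theta)$ and bounded measurable $a,b$ on $[\theta_0,\bar\theta]$, write $b\in\mathrm{MPS}(a)$ if $\int_x^{\bar\theta}b\,dF\le\int_x^{\bar\theta}a\,dF$ for all $x\in[\theta_0,\bar\theta]$, with equality at $x=\theta_0$. $\mathcal S(\theta_0)$ is the set of nondecreasing $s:[\theta_0,\bar\theta]\to[0,1]$ with $s\in\mathrm{MPS}(F)$. In an incentive-compatible mechanism with cutoff $\theta_0$, interim status $s$ and prices $p$, a participant's payoff is $U(\theta)=\theta s(\theta)-p(\theta)+v(\theta)$ with $v$ twice differentiable, $v'\ge0$, $v''\le0$, and $U(\theta)=U(\theta_0)+\int_{\theta_0}^\theta(s(x)+v'(x))dx$;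 then $W_S=\int_{\theta_0}^{\bar\theta}J_\lambda s\,dF+C$ where $C$ depends only on $\theta_0$, $U(\theta_0)$, $v$, $F$, $\lambda$. *)

(* Defs.v *)
From Stdlib Require Import Reals.
From Coquelicot Require Import Coquelicot.
Open Scope R_scope.

Definition continuous_within_interval (a b : R) (f : R -> R) (x : R) : Prop :=
  filterlim f (within (fun y => a <= y <= b) (locally x)) (locally (f x)).

Definition cdf_with_density (tbar : R) (F f : R -> R) : Prop :=
  (forall x, 0 <= x <= tbar -> continuous_within_interval 0 tbar f x) /\
  (forall x, 0 <= x <= tbar -> 0 < f x) /\
  (forall x, 0 <= x <= tbar -> F x = RInt f 0 x) /\
  F tbar = 1.

Definition int_dF (f : R -> R) (g : R -> R) (x tbar : R) : R :=
  RInt (fun t => g t * f t) x tbar.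

Definition MPS (f : R -> R) (t0 tbar : R) (a b : R -> R) : Prop :=
  (forall x, t0 <= x <= tbar -> int_dF f b x tbar <= int_dF f a x tbar) /\
  int_dF f b t0 tbar = int_dF f a t0 tbar.

Definition in_S (F f : R -> R) (t0 tbar : R) (s : R -> R) : Prop :=
  (forall x y, t0 <= x -> x <= y -> y <= tbar -> s x <= s y) /\
  (forall x, t0 <= x <= tbar -> 0 <= s x <= 1) /\
  MPS f t0 tbar F s.

Definition J (lam : R) (F f : R -> R) (t : R) : R :=
  lam * t - (lam - 1) * ((1 - F t) / f t).

(* Incentive-compatible payoff with cutoff t0, cutoff payoff U0, interim status s:
   U(t) = U0 + \int_{t0}^t (s + v'). *)
Definition payoff (dv s : R -> R) (t0 U0 : R) (t : R) : R :=
  U0 + RInt (fun x => s x + dv x) t0 t.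

(* Price implied by U(t) = t s(t) - p(t) + v(t). *)
Definition price (v dv s : R -> R) (t0 U0 : R) (t : R) : R :=
  t * s t + v t - payoff dv s t0 U0 t.

Definition welfare (lam : R) (f v dv s : R -> R) (t0 tbar U0 : R) : R :=
  int_dF f (fun t => lam * price v dv s t0 U0 t + payoff dv s t0 U0 t) t0 tbar.

(* Main.v *)
Require Import Defs.
From Stdlib Require Import Reals Lra Lia ZArith Classical.
From Coquelicot Require Import Coquelicot.
Open Scope R_scope.
Implicit Types f g : R -> R.
Implicit Types c M : R.

Lemma RI_plus f g a b : ex_RInt f a b -> ex_RInt g a b ->
  RInt (fun t => f t + g t) a b = RInt f a b + RInt g a b.
Proof. intros. apply (RInt_plus f g a b); auto. Qed.

Lemma RI_minus f g a b : ex_RInt f a b -> ex_RInt g a b ->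
  RInt (fun t => f t - g t) a b = RInt f a b - RInt g a b.
Proof. intros. apply (RInt_minus f g a b); auto. Qed.

Lemma RI_scal f c a b : ex_RInt f a b -> RInt (fun t => c * f t) a b = c * RInt f a b.
Proof. intros. apply (RInt_scal f a b c); auto. Qed.

Lemma RI_const c a b : RInt (fun _ => c) a b = c * (b - a).
Proof. rewrite RInt_const. unfold scal; simpl; unfold mult; simpl. ring. Qed.

Lemma RI_point (f : R -> R) a : @RInt R_CompleteNormedModule f a a = 0.
Proof. exact (RInt_point a f). Qed.

Lemma RI_chasles f a b c : ex_RInt f a b -> ex_RInt f b c ->
  RInt f a b + RInt f b c = RInt f a c.
Proof. intros. apply (RInt_Chasles f a b c); auto. Qed.

Lemma RI_ext f g a b : a <= b -> (forall t, a < t < b -> f t = g t) ->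
  RInt f a b = RInt g a b.
Proof. intros. apply RInt_ext. intros x Hx. rewrite Rmin_left in Hx by lra.
  rewrite Rmax_right in Hx by lra. auto. Qed.

Lemma ex_plus f g a b : ex_RInt f a b -> ex_RInt g a b -> ex_RInt (fun t => f t + g t) a b.
Proof. intros. apply (ex_RInt_plus f g); auto. Qed.
Lemma ex_minus f g a b : ex_RInt f a b -> ex_RInt g a b -> ex_RInt (fun t => f t - g t) a b.
Proof. intros. apply (ex_RInt_minus f g); auto. Qed.
Lemma ex_scal f c a b : ex_RInt f a b -> ex_RInt (fun t => c * f t) a b.
Proof. intros. apply (ex_RInt_scal f a b c); auto. Qed.
Lemma ex_const c a b : ex_RInt (fun _ => c) a b.
Proof. apply ex_RInt_const. Qed.
Lemma ex_ext f g a b : a <= b -> (forall t, a < t < b -> f t = g t) ->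
  ex_RInt f a b -> ex_RInt g a b.
Proof. intros. apply (ex_RInt_ext f). intros x Hx. rewrite Rmin_left in Hx by lra.
  rewrite Rmax_right in Hx by lra. auto. auto. Qed.
Lemma ex_sub f a b c d : a <= c -> c <= d -> d <= b -> ex_RInt f a b -> ex_RInt f c d.
Proof. intros. apply (ex_RInt_Chasles_2 f a c d). lra. apply (ex_RInt_Chasles_1 f a d b). lra. auto. Qed.
Lemma ex_chasles f a b c : ex_RInt f a b -> ex_RInt f b c -> ex_RInt f a c.
Proof. intros. apply (ex_RInt_Chasles f a b c); auto. Qed.

Lemma RI_le f g a b : a <= b -> ex_RInt f a b -> ex_RInt g a b ->
  (forall t, a < t < b -> f t <= g t) -> RInt f a b <= RInt g a b.
Proof. intros. apply RInt_le; auto. Qed.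

Lemma RI_ge0 f a b : a <= b -> ex_RInt f a b ->
  (forall t, a < t < b -> 0 <= f t) -> 0 <= RInt f a b.
Proof. intros. apply RInt_ge_0; auto. Qed.

Lemma RI_abs f a b M : a <= b -> ex_RInt f a b ->
  (forall t, a <= t <= b -> Rabs (f t) <= M) -> Rabs (RInt f a b) <= (b - a) * M.
Proof. intros. apply abs_RInt_le_const; auto. Qed.

Lemma ex_bound f a b : a <= b -> ex_RInt f a b -> exists M, forall t, a <= t <= b -> Rabs (f t) <= M.
Proof. intros H Hf. destruct (ex_RInt_ub f a b Hf) as [M HM]. exists M. intros t Ht.
  apply HM. rewrite Rmin_left, Rmax_right; lra. Qed.
Lemma tele (K phi : R -> R) a b C : a <= b -> 0 <= C ->
  (forall x y, a <= x -> x <= y -> y <= b -> phi x <= phi y) ->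
  (forall x y, a <= x -> x <= y -> y <= b -> K y - K x <= C * (y - x) * (phi y - phi x)) ->
  K b <= K a.
Proof.
  intros Hab HC Hphi HK.
  assert (Hn : forall n : nat, (1 <= n)%nat ->
     K b - K a <= C * ((b - a) / INR n) * (phi b - phi a)).
  { intros n Hn. assert (Hnp : 0 < INR n) by (apply lt_0_INR; lia).
    set (h := (b - a) / INR n).
    assert (Hh : 0 <= h) by (unfold h; apply Rmult_le_pos; [lra|left; apply Rinv_0_lt_compat; lra]).
    assert (Hnh : INR n * h = b - a) by (unfold h; field; lra).
    assert (Hk : forall k, (k <= n)%nat ->
      K (a + INR k * h) - K a <= C * h * (phi (a + INR k * h) - phi a)).
    { induction k as [|k IH]; intros Hkn.
      - simpl. replace (a + 0 * h) with a by ring. lra.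
      - assert (Hk1 : (k <= n)%nat) by lia. specialize (IH Hk1).
        rewrite S_INR.
        assert (HkR : INR (S k) <= INR n) by (apply le_INR; lia). rewrite S_INR in HkR.
        assert (0 <= INR k) by apply pos_INR.
        assert (Hx : a <= a + INR k * h) by nra.
        assert (Hy : a + (INR k + 1) * h <= b) by nra.
        assert (Hxy : a + INR k * h <= a + (INR k + 1) * h) by nra.
        pose proof (HK _ _ Hx Hxy Hy) as H1.
        replace (a + (INR k + 1) * h - (a + INR k * h)) with h in H1 by ring.
        lra. }
    specialize (Hk n (Nat.le_refl n)). rewrite Hnh in Hk.
    replace (a + (b - a)) with b in Hk by ring. exact Hk. }
  destruct (Rle_or_lt (K b) (K a)) as [H|H]; auto.
  exfalso.
  set (D := C * (b - a) * (phi b - phi a)).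
  assert (HD : 0 <= D).
  { unfold D. assert (phi a <= phi b) by (apply Hphi; lra).
    apply Rmult_le_pos; [apply Rmult_le_pos|]; lra. }
  destruct (archimed (D / (K b - K a))) as [Hup _].
  set (m := up (D / (K b - K a))) in *.
  assert (Hm : (0 < m)%Z).
  { apply lt_IZR. assert (0 <= D / (K b - K a)) by (apply Rmult_le_pos; [lra|left; apply Rinv_0_lt_compat; lra]). lra. }
  assert (Hn1 := Hn (Z.to_nat m) ltac:(lia)).
  rewrite INR_IZR_INZ, Z2Nat.id in Hn1 by lia.
  assert (Hmp : 0 < IZR m) by (apply IZR_lt; lia).
  replace (C * ((b - a) / IZR m) * (phi b - phi a)) with (D / IZR m) in Hn1
    by (unfold D; field; lra).
  assert (D < IZR m * (K b - K a)).
  { apply (Rmult_lt_compat_r (K b - K a)) in Hup; [|lra].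
    unfold Rdiv in Hup. rewrite Rmult_assoc, Rinv_l in Hup; lra. }
  apply (Rmult_le_compat_l (IZR m)) in Hn1; [|lra].
  replace (IZR m * (D / IZR m)) with D in Hn1 by (field; lra). lra.
Qed.

Lemma ind_int (P : R -> Prop) g h a b : a <= b -> ex_RInt g a b ->
  (forall x y, a <= x -> x <= y -> y <= b -> P x -> P y) ->
  (forall t, a <= t <= b -> (P t -> h t = g t) /\ (~ P t -> h t = 0)) ->
  ex_RInt h a b.
Proof.
  intros Hab Hg HP Hh.
  set (E := fun t => a <= t <= b /\ (t = a \/ ~ P t)).
  assert (HE1 : bound E) by (exists b; intros x [Hx _]; lra).
  assert (HE2 : exists x, E x) by (exists a; split; [lra|left; auto]).
  destruct (completeness E HE1 HE2) as [m [Hub Hlub]].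
  assert (Ham : a <= m) by (apply Hub; split; [lra|left; auto]).
  assert (Hmb : m <= b) by (apply Hlub; intros x [Hx _]; lra).
  assert (H1 : forall t, a < t < m -> ~ P t).
  { intros t Ht HPt. assert (m <= t); [|lra].
    apply Hlub. intros u [Hu [Hua|HnP]]; [lra|].
    destruct (Rle_or_lt u t); auto. exfalso. apply HnP. apply (HP t); lra || auto. }
  assert (H2 : forall t, m < t <= b -> P t).
  { intros t Ht. apply NNPP. intro HnP. assert (t <= m); [|lra].
    apply Hub. split; [lra|right; auto]. }
  apply (ex_chasles _ a m b).
  - apply (ex_ext (fun _ => 0)); [lra| |apply ex_const].
    intros t Ht. symmetry. apply (proj2 (Hh t ltac:(lra))). apply H1; lra.
  - apply (ex_ext g); [lra| |apply (ex_sub g a b); lra || auto].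
    intros t Ht. symmetry. apply (proj1 (Hh t ltac:(lra))). apply H2; lra.
Qed.

Definition ind0 (y : R) : R := if Rlt_dec 0 y then 1 else 0.
Fixpoint cnt (y : R) (n : nat) : R :=
  match n with O => 0 | S n => ind0 y + cnt (y - 1) n end.

Lemma cnt_zero n : forall y, y <= 0 -> cnt y n = 0.
Proof. induction n; intros y Hy; simpl; auto. unfold ind0. destruct (Rlt_dec 0 y); [lra|].
  rewrite IHn by lra. ring. Qed.

Lemma cnt_bound n : forall y, 0 <= y <= INR n -> Rabs (y - cnt y n) <= 1.
Proof.
  induction n; intros y Hy.
  - simpl in *. replace y with 0 by lra. rewrite Rminus_0_r, Rabs_R0; lra.
  - rewrite S_INR in Hy. simpl cnt. unfold ind0. destruct (Rle_or_lt y 1).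
    + rewrite cnt_zero by lra. destruct (Rlt_dec 0 y); apply Rabs_le; lra.
    + destruct (Rlt_dec 0 y); [|lra]. specialize (IHn (y - 1) ltac:(lra)).
      replace (y - (1 + cnt (y - 1) n)) with (y - 1 - cnt (y - 1) n) by ring. auto.
Qed.

Lemma cnt_int s g a b : a <= b -> ex_RInt g a b ->
  (forall x y, a <= x -> x <= y -> y <= b -> s x <= s y) ->
  forall n m c, 0 <= m -> ex_RInt (fun t => cnt (m * s t - c) n * g t) a b.
Proof.
  intros Hab Hg Hs n. induction n; intros m c Hm.
  - apply (ex_ext (fun _ => 0)); auto; [|apply ex_const]. intros t _. simpl. ring.
  - apply (ex_ext (fun t => ind0 (m * s t - c) * g t + cnt (m * s t - (c + 1)) n * g t)); auto.
    + intros t _. simpl. replace (m * s t - c - 1) with (m * s t - (c + 1)) by ring. ring.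
    + apply ex_plus; auto.
      apply (ind_int (fun t => 0 < m * s t - c) g); auto.
      * intros x y Hx Hxy Hy H. assert (s x <= s y) by auto. nra.
      * intros t _. unfold ind0. split; intro H; destruct (Rlt_dec 0 (m * s t - c)); try tauto; ring.
Qed.

Lemma ML_core s g a b M : a <= b -> (forall t, 0 <= s t <= 1) ->
  (forall x y, a <= x -> x <= y -> y <= b -> s x <= s y) ->
  (forall t, Rabs (g t) <= M) -> ex_RInt g a b -> ex_RInt (fun t => s t * g t) a b.
Proof.
  intros Hab Hs01 Hs Hgm Hg.
  set (u := fun (n : nat) t => cnt (INR n * s t) n / INR n * g t).
  assert (Hu : forall n, ex_RInt (u n) a b).
  { intros n. apply (ex_ext (fun t => / INR n * (cnt (INR n * s t - 0) n * g t))); auto.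
    - intros t _. unfold u. rewrite Rminus_0_r. unfold Rdiv. ring.
    - apply ex_scal. apply cnt_int; auto. apply pos_INR. }
  assert (HM : 0 <= M) by (specialize (Hgm 0); pose proof (Rabs_pos (g 0)); lra).
  assert (Hlim : filterlim u eventually (locally (fun t => s t * g t))).
  { apply filterlim_locally. intros eps.
    destruct (archimed ((M + 1) / eps)) as [Hup _].
    assert (Heps := cond_pos eps).
    assert (0 <= (M + 1) / eps) by (apply Rmult_le_pos; [lra|left; apply Rinv_0_lt_compat; lra]).
    exists (Z.to_nat (up ((M + 1) / eps))). intros n Hn t.
    assert (HnR : IZR (up ((M + 1) / eps)) <= INR n).
    { rewrite <- (Z2Nat.id (up _)) by (apply le_IZR; lra). rewrite <- INR_IZR_INZ. apply le_INR; auto. }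
    assert (Hnp : 0 < INR n) by lra.
    assert (Hk : (M + 1) < eps * INR n).
    { apply (Rmult_lt_compat_l eps) in Hup; auto.
      replace (eps * ((M + 1) / eps)) with (M + 1) in Hup by (field; lra). nra. }
    change (Rabs (u n t - s t * g t) < eps). unfold u.
    specialize (Hs01 t).
    pose proof (cnt_bound n (INR n * s t) ltac:(nra)) as Hc.
    replace (cnt (INR n * s t) n / INR n * g t - s t * g t)
      with (- ((INR n * s t - cnt (INR n * s t) n) * g t / INR n)) by (field; lra).
    rewrite Rabs_Ropp. unfold Rdiv. rewrite Rabs_mult, Rabs_mult, Rabs_inv, (Rabs_right (INR n)) by lra.
    assert (Rabs (INR n * s t - cnt (INR n * s t) n) * Rabs (g t) <= M).
    { specialize (Hgm t). pose proof (Rabs_pos (g t)). pose proof (Rabs_pos (INR n * s t - cnt (INR n * s t) n)). nra. }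
    apply (Rmult_lt_reg_r (INR n)); auto. rewrite Rmult_assoc, Rinv_l by lra. lra. }
  destruct (filterlim_RInt u a b eventually eventually_filter _ (fun n => RInt (u n) a b)
    (fun n => RInt_correct _ _ _ (Hu n)) Hlim) as [I [_ HI]].
  exists I. exact HI.
Qed.

Lemma ML s g a b : a <= b -> (forall x y, a <= x -> x <= y -> y <= b -> s x <= s y) ->
  ex_RInt g a b -> ex_RInt (fun t => s t * g t) a b.
Proof.
  intros Hab Hs Hg.
  destruct (ex_bound g a b Hab Hg) as [M HM].
  set (cl := fun t => Rmax a (Rmin b t)).
  assert (Hcl : forall t, a <= cl t <= b).
  { intros t. unfold cl. split; [apply Rmax_l|]. apply Rmax_lub; [lra|apply Rmin_l]. }
  assert (Hcl2 : forall t, a <= t <= b -> cl t = t).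
  { intros t Ht. unfold cl. rewrite Rmin_right by lra. rewrite Rmax_right; lra. }
  assert (Hsab : s a <= s b) by (apply Hs; lra).
  set (k := s b - s a + 1).
  set (s' := fun t => (s (cl t) - s a) / k).
  set (g' := fun t => g (cl t)).
  assert (Hk : 0 < k) by (unfold k; lra).
  assert (Hs'g' : ex_RInt (fun t => s' t * g' t) a b).
  { apply (ML_core s' g' a b M); auto.
    - intros t. unfold s'. specialize (Hcl t).
      assert (s a <= s (cl t)) by (apply Hs; lra). assert (s (cl t) <= s b) by (apply Hs; lra).
      split; [apply Rmult_le_pos; [lra|left; apply Rinv_0_lt_compat; lra]|].
      apply (Rmult_le_reg_r k); auto. unfold Rdiv. rewrite Rmult_assoc, Rinv_l by lra. unfold k; lra.
    - intros x y Hx Hxy Hy. unfold s'. rewrite !Hcl2 by lra.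
      unfold Rdiv. apply Rmult_le_compat_r; [left; apply Rinv_0_lt_compat; lra|].
      assert (s x <= s y) by auto. lra.
    - intros t. apply HM. apply Hcl.
    - apply (ex_ext g); auto. intros t Ht. unfold g'. rewrite Hcl2; lra. }
  apply (ex_ext (fun t => s a * g t + k * (s' t * g' t))); auto.
  - intros t Ht. unfold s', g'. rewrite Hcl2 by lra. field. lra.
  - apply ex_plus; apply ex_scal; auto.
Qed.

Lemma ML_dec s g a b : a <= b -> (forall x y, a <= x -> x <= y -> y <= b -> s y <= s x) ->
  ex_RInt g a b -> ex_RInt (fun t => s t * g t) a b.
Proof.
  intros Hab Hs Hg.
  apply (ex_ext (fun t => -1 * ((- s t) * g t))); auto.
  - intros; ring.
  - apply ex_scal. apply (ML (fun t => - s t)); auto. intros x y Hx Hxy Hy. specialize (Hs x y Hx Hxy Hy). lra.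
Qed.

Lemma key1 (J g : R -> R) a b M : a <= b ->
  (forall x y, a <= x -> x <= y -> y <= b -> J x <= J y) ->
  ex_RInt g a b -> ex_RInt (fun t => J t * g t) a b ->
  (forall t, a <= t <= b -> Rabs (g t) <= M) ->
  (forall x, a <= x <= b -> 0 <= RInt g x b) ->
  RInt g a b = 0 -> 0 <= RInt (fun t => J t * g t) a b.
Proof.
  intros Hab HJ Hg HJg HM HG HGa.
  assert (HM0 : 0 <= M) by (specialize (HM a ltac:(lra)); pose proof (Rabs_pos (g a)); lra).
  set (Jg := fun t => J t * g t).
  set (K := fun x => RInt Jg x b - J x * RInt g x b).
  assert (Htl := tele K J a b M Hab HM0 HJ).
  assert (HKb : K b = 0).
  { unfold K. rewrite !RI_point. ring. }
  assert (HKa : K a = RInt Jg a b) by (unfold K; rewrite HGa; ring).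
  rewrite <- HKa, <- HKb. apply Htl.
  intros x y Hx Hxy Hy.
  assert (Hgxy : ex_RInt g x y) by (apply (ex_sub g a b); lra || auto).
  assert (Hgyb : ex_RInt g y b) by (apply (ex_sub g a b); lra || auto).
  assert (HJxy : ex_RInt Jg x y) by (apply (ex_sub Jg a b); lra || auto).
  assert (HJyb : ex_RInt Jg y b) by (apply (ex_sub Jg a b); lra || auto).
  unfold K.
  rewrite <- (RI_chasles Jg x y b), <- (RI_chasles g x y b) by auto.
  assert (Heq : RInt Jg x y - J x * RInt g x y = RInt (fun t => (J t - J x) * g t) x y).
  { rewrite <- RI_scal by auto. rewrite <- RI_minus by (auto; apply ex_scal; auto).
    apply RI_ext; auto. intros t _. unfold Jg. ring. }
  assert (Hab2 : Rabs (RInt (fun t => (J t - J x) * g t) x y) <= (y - x) * ((J y - J x) * M)).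
  { apply RI_abs; auto.
    - apply (ex_ext (fun t => Jg t - J x * g t)); auto. intros; unfold Jg; ring.
      apply ex_minus; auto. apply ex_scal; auto.
    - intros t Ht. rewrite Rabs_mult. assert (J x <= J t) by (apply HJ; lra).
      assert (J t <= J y) by (apply HJ; lra). rewrite Rabs_right by lra.
      apply Rmult_le_compat; try lra; [apply Rabs_pos|apply HM; lra]. }
  assert (HGy := HG y ltac:(lra)). assert (J x <= J y) by (apply HJ; lra).
  apply Rabs_le_between in Hab2.
  assert (0 <= (J y - J x) * RInt g y b) by (apply Rmult_le_pos; lra).
  nra.
Qed.

Lemma key2 (d f : R -> R) a b D M : a <= b -> ex_RInt d a b -> ex_RInt f a b ->
  (forall t, a <= t <= b -> Rabs (d t) <= D) ->
  (forall t, a <= t <= b -> Rabs (f t) <= M) ->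
  ex_RInt (fun t => RInt d a t * f t) a b ->
  ex_RInt (fun t => d t * RInt f a t) a b ->
  RInt (fun t => RInt d a t * f t) a b
    = RInt d a b * RInt f a b - RInt (fun t => d t * RInt f a t) a b.
Proof.
  intros Hab Hd Hf HD HM HQf HdE.
  assert (HD0 : 0 <= D) by (specialize (HD a ltac:(lra)); pose proof (Rabs_pos (d a)); lra).
  assert (HM0 : 0 <= M) by (specialize (HM a ltac:(lra)); pose proof (Rabs_pos (f a)); lra).
  set (Q := fun x => RInt d a x). set (E := fun x => RInt f a x).
  set (Qf := fun t => Q t * f t). set (dE := fun t => d t * E t).
  set (L := fun x => RInt Qf a x - Q x * E x + RInt dE a x).
  assert (Hbd : forall x y, a <= x -> x <= y -> y <= b ->
     Rabs (L y - L x) <= (2 * D * M) * (y - x) * (y - x)).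
  { intros x y Hx Hxy Hy.
    assert (Hsub : forall h, ex_RInt h a b -> forall u w, a <= u -> u <= w -> w <= b -> ex_RInt h u w)
      by (intros; apply (ex_sub h a b); auto).
    assert (HQy : forall t, a <= t <= y -> Q y = Q t + RInt d t y).
    { intros t Ht. unfold Q. rewrite RI_chasles; auto; apply Hsub; lra || auto. }
    assert (HEt : forall t, x <= t <= y -> E t = E x + RInt f x t).
    { intros t Ht. unfold E. rewrite RI_chasles; auto; apply Hsub; lra || auto. }
    assert (HQfa : RInt Qf a y = RInt Qf a x + RInt Qf x y) by (rewrite RI_chasles; auto; apply Hsub; lra || auto).
    assert (HdEa : RInt dE a y = RInt dE a x + RInt dE x y) by (rewrite RI_chasles; auto; apply Hsub; lra || auto).
    assert (Hfxy : ex_RInt f x y) by (apply Hsub; lra || auto).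
    assert (Hdxy : ex_RInt d x y) by (apply Hsub; lra || auto).
    assert (HQfxy : ex_RInt Qf x y) by (apply Hsub; lra || auto).
    assert (HdExy : ex_RInt dE x y) by (apply Hsub; lra || auto).
    assert (T1 : RInt Qf x y - Q y * RInt f x y = RInt (fun t => (Q t - Q y) * f t) x y).
    { rewrite <- RI_scal by auto. rewrite <- RI_minus by (auto; apply ex_scal; auto).
      apply RI_ext; auto. intros t _. unfold Qf. ring. }
    assert (T2 : RInt dE x y - E x * RInt d x y = RInt (fun t => (E t - E x) * d t) x y).
    { rewrite <- RI_scal by auto. rewrite <- RI_minus by (auto; apply ex_scal; auto).
      apply RI_ext; auto. intros t _. unfold dE. ring. }
    assert (B1 : Rabs (RInt (fun t => (Q t - Q y) * f t) x y) <= (y - x) * ((y - x) * D * M)).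
    { apply RI_abs; auto.
      - apply (ex_ext (fun t => Qf t - Q y * f t)); auto. intros; unfold Qf; ring.
        apply ex_minus; auto. apply ex_scal; auto.
      - intros t Ht. rewrite Rabs_mult. rewrite (HQy t) by lra.
        replace (Q t - (Q t + RInt d t y)) with (- RInt d t y) by ring. rewrite Rabs_Ropp.
        assert (Rabs (RInt d t y) <= (y - t) * D) by (apply RI_abs; [lra|apply Hsub; lra || auto|intros; apply HD; lra]).
        apply Rmult_le_compat; try apply Rabs_pos; [nra|apply HM; lra]. }
    assert (B2 : Rabs (RInt (fun t => (E t - E x) * d t) x y) <= (y - x) * ((y - x) * M * D)).
    { apply RI_abs; auto.
      - apply (ex_ext (fun t => dE t - E x * d t)); auto. intros; unfold dE; ring.
        apply ex_minus; auto. apply ex_scal; auto.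
      - intros t Ht. rewrite Rabs_mult. rewrite (HEt t) by lra.
        assert (Heq0 : E x + RInt f x t - E x = RInt f x t) by ring. rewrite Heq0.
        assert (Rabs (RInt f x t) <= (t - x) * M) by (apply RI_abs; [lra|apply Hsub; lra || auto|intros; apply HM; lra]).
        apply Rmult_le_compat; try apply Rabs_pos; [nra|apply HD; lra]. }
    assert (HLe : L y - L x = RInt (fun t => (Q t - Q y) * f t) x y + RInt (fun t => (E t - E x) * d t) x y).
    { rewrite <- T1, <- T2. unfold L. rewrite HQfa, HdEa.
      rewrite (HQy x) by lra. rewrite (HEt y) by lra. ring. }
    rewrite HLe. eapply Rle_trans; [apply Rabs_triang|]. lra. }
  assert (HC : 0 <= 2 * D * M) by nra.
  assert (Hid : forall x y, a <= x -> x <= y -> y <= b -> x <= y) by auto.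
  assert (H1 : L b <= L a).
  { apply (tele L (fun x => x) a b (2 * D * M)); auto.
    intros x y Hx Hxy Hy. specialize (Hbd x y Hx Hxy Hy). apply Rabs_le_between in Hbd. lra. }
  assert (H2 : - L b <= - L a).
  { apply (tele (fun x => - L x) (fun x => x) a b (2 * D * M)); auto.
    intros x y Hx Hxy Hy. specialize (Hbd x y Hx Hxy Hy). apply Rabs_le_between in Hbd. lra. }
  assert (HLa : L a = 0) by (unfold L, Q; rewrite !RI_point; ring).
  assert (HLb : L b = 0) by lra.
  unfold L in HLb. assert (Hfin : @eq R (RInt Qf a b) (Q b * E b - RInt dE a b)) by lra. exact Hfin.
Qed.

Lemma cont_clamp f lo hi z : lo <= z <= hi -> continuous_within_interval lo hi f z ->
  continuous (fun t => f (Rmax lo (Rmin hi t))) z.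
Proof.
  intros Hz Hc. unfold continuous_within_interval in Hc.
  assert (Hcz : Rmax lo (Rmin hi z) = z).
  { rewrite Rmin_right by lra. rewrite Rmax_right; lra. }
  unfold continuous. rewrite Hcz.
  apply filterlim_locally. intros eps.
  apply filterlim_locally with (eps := eps) in Hc.
  destruct Hc as [del Hdel].
  exists del. intros y Hy. apply Hdel.
  - change (Rabs (Rmax lo (Rmin hi y) - z) < del). change (Rabs (y - z) < del) in Hy.
    apply Rabs_def2 in Hy. destruct Hy as [Hy1 Hy2]. apply Rabs_def1.
    + apply Rmax_case_strong; intros; [lra|]. apply Rmin_case_strong; intros; lra.
    + pose proof (cond_pos del). unfold Rmax, Rmin; repeat destruct Rle_dec; lra.
    + pose proof (cond_pos del). unfold Rmax, Rmin; repeat destruct Rle_dec; lra.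
Qed.

Lemma f_int tbar F f : 0 < tbar -> cdf_with_density tbar F f -> ex_RInt f 0 tbar.
Proof.
  intros Ht [Hc _].
  apply (ex_ext (fun t => f (Rmax 0 (Rmin tbar t)))); [lra| |].
  - intros t Ht2. rewrite Rmin_right by lra. rewrite Rmax_right; lra.
  - apply (@ex_RInt_continuous R_CompleteNormedModule). intros z Hz. rewrite Rmin_left, Rmax_right in Hz by lra.
    apply cont_clamp; auto.
Qed.

Lemma F_diff tbar F f : 0 < tbar -> cdf_with_density tbar F f ->
  forall x y, 0 <= x -> x <= y -> y <= tbar -> F y - F x = RInt f x y.
Proof.
  intros Ht HF x y Hx Hxy Hy. pose proof (f_int tbar F f Ht HF) as Hf.
  destruct HF as [_ [_ [HFi _]]]. rewrite !HFi by lra.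
  rewrite <- (RI_chasles f 0 x y). ring.
  apply (ex_sub f 0 tbar); lra || auto. apply (ex_sub f 0 tbar); lra || auto.
Qed.

Lemma F_mono tbar F f : 0 < tbar -> cdf_with_density tbar F f ->
  forall x y, 0 <= x -> x <= y -> y <= tbar -> F x <= F y.
Proof.
  intros Ht HF x y Hx Hxy Hy. pose proof (F_diff tbar F f Ht HF x y Hx Hxy Hy).
  pose proof (f_int tbar F f Ht HF) as Hf.
  assert (0 <= RInt f x y); [|lra].
  apply RI_ge0; auto. apply (ex_sub f 0 tbar); lra || auto.
  intros t Ht2. destruct HF as [_ [Hp _]]. left; apply Hp; lra.
Qed.

Lemma F_01 tbar F f : 0 < tbar -> cdf_with_density tbar F f ->
  forall x, 0 <= x <= tbar -> 0 <= F x <= 1.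
Proof.
  intros Ht HF x Hx.
  assert (F 0 = 0) by (destruct HF as [_ [_ [HFi _]]]; rewrite HFi by lra; apply RI_point).
  assert (F tbar = 1) by (destruct HF as [_ [_ [_ H1]]]; auto).
  pose proof (F_mono tbar F f Ht HF 0 x). pose proof (F_mono tbar F f Ht HF x tbar). 
  split; [|rewrite <- H0]; [rewrite <- H|]; [apply H1|apply H2]; lra.
Qed.

Lemma deriv_mono (v dv : R -> R) tbar : 
  (forall x, 0 <= x <= tbar -> is_derive v x (dv x)) ->
  (forall x, 0 <= x <= tbar -> 0 <= dv x) ->
  forall x y, 0 <= x -> x <= y -> y <= tbar -> v x <= v y.
Proof.
  intros Hd Hp x y Hx Hxy Hy.
  destruct (Req_dec x y) as [->|Hne]; [lra|].
  destruct (MVT_gen v x y dv) as [c [Hc Heq]].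
  - intros z Hz. rewrite Rmin_left, Rmax_right in Hz by lra. apply Hd; lra.
  - intros z Hz. rewrite Rmin_left, Rmax_right in Hz by lra. apply continuity_pt_filterlim.
    apply (@ex_derive_continuous R_AbsRing R_NormedModule). exists (dv z). apply Hd; lra.
  - rewrite Rmin_left, Rmax_right in Hc by lra.
    assert (0 <= dv c) by (apply Hp; lra). nra.
Qed.

Theorem proposition5 (tbar lam : R) (F f : R -> R)
  (Htbar : 0 < tbar)
  (HF : cdf_with_density tbar F f)
  (Hlam : 0 <= lam)
  (HJ : forall x y, 0 <= x -> x <= y -> y <= tbar -> J lam F f x <= J lam F f y) :
  forall t0, 0 <= t0 < tbar ->
    (in_S F f t0 tbar F /\
     (forall s, in_S F f t0 tbar s ->
        int_dF f (fun t => J lam F f t * s t) t0 tbar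
        <= int_dF f (fun t => J lam F f t * F t) t0 tbar)) /\
    (forall (v dv d2v : R -> R) (U0 : R),
       (forall x, 0 <= x <= tbar -> is_derive v x (dv x)) ->
       (forall x, 0 <= x <= tbar -> is_derive dv x (d2v x)) ->
       (forall x, 0 <= x <= tbar -> 0 <= dv x) ->
       (forall x, 0 <= x <= tbar -> d2v x <= 0) ->
       forall s, in_S F f t0 tbar s ->
         welfare lam f v dv s t0 tbar U0 <= welfare lam f v dv F t0 tbar U0).
Proof.
  intros t0 Ht0.
  assert (Hab : t0 <= tbar) by (lra).
  pose proof (f_int tbar F f Htbar HF) as Hf0.
  assert (Hfab : ex_RInt f t0 tbar) by (apply (ex_sub f 0 tbar); lra || auto).
  destruct (ex_bound f t0 tbar Hab Hfab) as [Mf HMf].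
  assert (Hfpos : forall t, t0 <= t <= tbar -> 0 < f t).
  { intros t Ht. destruct HF as [_ [Hp _]]. apply Hp. lra. }
  assert (HFm : forall x y, t0 <= x -> x <= y -> y <= tbar -> F x <= F y).
  { intros. apply (F_mono tbar F f); auto; lra. }
  assert (HF01 : forall x, t0 <= x <= tbar -> 0 <= F x <= 1).
  { intros. apply (F_01 tbar F f); auto; lra. }
  set (Jf := fun t => lam * (t * f t) - (lam - 1) * (1 - F t)).
  assert (HJf : forall t X, t0 < t < tbar -> J lam F f t * X * f t = X * Jf t).
  { intros t X Ht. unfold J, Jf. assert (0 < f t) by (apply Hfpos; lra). field. lra. }
  assert (Htf : ex_RInt (fun t => t * f t) t0 tbar) by (apply ML; auto).
  assert (HFint : ex_RInt F t0 tbar).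
  { apply (ex_ext (fun t => F t * 1)); auto. intros; ring. apply ML; auto. apply ex_const. }
  assert (HJfint : ex_RInt Jf t0 tbar).
  { apply ex_minus; apply ex_scal; auto. apply ex_minus; auto. apply ex_const. }
  assert (Hsub : forall h, ex_RInt h t0 tbar -> forall u w, t0 <= u -> u <= w -> w <= tbar -> ex_RInt h u w)
      by (intros; apply (ex_sub h t0 tbar); auto).
  assert (P1 : forall s, in_S F f t0 tbar s ->
        RInt (fun t => s t * Jf t) t0 tbar <= RInt (fun t => F t * Jf t) t0 tbar).
  { intros s [Hsm [Hs01 [HMPS1 HMPS2]]].
    assert (HsJ : ex_RInt (fun t => s t * Jf t) t0 tbar) by (apply ML; auto).
    assert (HFJ : ex_RInt (fun t => F t * Jf t) t0 tbar) by (apply ML; auto).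
    assert (Hsf : ex_RInt (fun t => s t * f t) t0 tbar) by (apply ML; auto).
    assert (HFf : ex_RInt (fun t => F t * f t) t0 tbar) by (apply ML; auto).
    set (g := fun t => F t * f t - s t * f t).
    assert (Hg : ex_RInt g t0 tbar) by (apply ex_minus; auto).
    assert (HG : forall x, t0 <= x <= tbar -> RInt g x tbar = int_dF f F x tbar - int_dF f s x tbar).
    { intros x Hx. unfold g, int_dF. apply RI_minus; apply Hsub; lra || auto. }
    assert (Hk := key1 (J lam F f) g t0 tbar Mf Hab).
    assert (Heq : RInt (fun t => J lam F f t * g t) t0 tbar
                  = RInt (fun t => F t * Jf t) t0 tbar - RInt (fun t => s t * Jf t) t0 tbar).
    { rewrite <- RI_minus by auto. apply RI_ext; auto. intros t Ht. unfold g.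
      rewrite <- (HJf t (F t)), <- (HJf t (s t)) by auto. ring. }
    assert (0 <= RInt (fun t => J lam F f t * g t) t0 tbar); [|lra].
    apply Hk; auto.
    - intros x y Hx Hxy Hy. apply HJ; lra.
    - apply (ex_ext (fun t => F t * Jf t - s t * Jf t)); auto.
      intros t Ht. unfold g. rewrite <- (HJf t (F t)), <- (HJf t (s t)) by auto. ring.
      apply ex_minus; auto.
    - intros t Ht. unfold g. replace (F t * f t - s t * f t) with ((F t - s t) * f t) by ring.
      rewrite Rabs_mult. specialize (HF01 t Ht). specialize (Hs01 t Ht).
      assert (Rabs (F t - s t) <= 1) by (apply Rabs_le; lra).
      assert (Rabs (f t) <= Mf) by auto.
      pose proof (Rabs_pos (F t - s t)). pose proof (Rabs_pos (f t)). nra.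
    - intros x Hx. rewrite HG by auto. specialize (HMPS1 x Hx). lra.
    - rewrite HG by lra. lra. }
  split; [split|].
  - split; [exact HFm|split; [exact HF01|]]. split; [intros; lra|auto].
  - intros s Hs. unfold int_dF.
    rewrite (RI_ext (fun t => J lam F f t * s t * f t) (fun t => s t * Jf t) t0 tbar), (RI_ext (fun t => J lam F f t * F t * f t) (fun t => F t * Jf t) t0 tbar)
      by (auto; intros; apply HJf; auto).
    apply P1; auto.
  - intros v dv d2v U0 Hv Hdv Hdvp Hd2v s Hs.
    assert (Hsm := proj1 Hs). assert (Hs01 := proj1 (proj2 Hs)).
    assert (Hvm : forall x y, t0 <= x -> x <= y -> y <= tbar -> v x <= v y).
    { intros. apply (deriv_mono v dv tbar); auto; lra. }
    assert (Hdvm : forall x y, t0 <= x -> x <= y -> y <= tbar -> dv y <= dv x).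
    { intros x y Hx Hxy Hy.
      assert (- dv x <= - dv y); [|lra].
      apply (deriv_mono (fun x => - dv x) (fun x => - d2v x) tbar); auto; try lra.
      - intros z Hz. apply (is_derive_opp dv z (d2v z)). auto.
      - intros z Hz. specialize (Hd2v z Hz). lra. }
    assert (Hdvint : ex_RInt dv t0 tbar).
    { apply (ex_ext (fun t => dv t * 1)); auto. intros; ring. apply ML_dec; auto. apply ex_const. }
    assert (Hone : forall σ, (forall x y, t0 <= x -> x <= y -> y <= tbar -> σ x <= σ y) -> ex_RInt σ t0 tbar).
    { intros σ Hσ. apply (ex_ext (fun t => σ t * 1)); auto. intros; ring. apply ML; auto. apply ex_const. }
    assert (HP : forall σ, (forall x y, t0 <= x -> x <= y -> y <= tbar -> σ x <= σ y) ->
       (forall x, t0 <= x <= tbar -> 0 <= σ x <= 1) ->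
       ex_RInt (fun t => σ t + dv t) t0 tbar /\
       (forall x y, t0 <= x -> x <= y -> y <= tbar -> payoff dv σ t0 U0 x <= payoff dv σ t0 U0 y)).
    { intros σ Hσ Hσ01.
      assert (Hi : ex_RInt (fun t => σ t + dv t) t0 tbar) by (apply ex_plus; auto).
      split; auto. intros x y Hx Hxy Hy. unfold payoff.
      rewrite <- (RI_chasles (fun x0 => σ x0 + dv x0) t0 x y) by (apply Hsub; auto; lra).
      assert (0 <= RInt (fun x0 => σ x0 + dv x0) x y); [|lra].
      apply RI_ge0; [lra|apply Hsub; auto; lra|].
      intros t Ht. specialize (Hσ01 t ltac:(lra)). specialize (Hdvp t ltac:(lra)). lra. }
    assert (Hw : forall σ, (forall x y, t0 <= x -> x <= y -> y <= tbar -> σ x <= σ y) ->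
       (forall x, t0 <= x <= tbar -> 0 <= σ x <= 1) ->
       ex_RInt (fun t => (lam * price v dv σ t0 U0 t + payoff dv σ t0 U0 t) * f t) t0 tbar).
    { intros σ Hσ Hσ01. destruct (HP σ Hσ Hσ01) as [_ HPm].
      apply (ex_ext (fun t => lam * (σ t * (t * f t)) + lam * (v t * f t) + (1 - lam) * (payoff dv σ t0 U0 t * f t))); auto.
      - intros t _. unfold price. ring.
      - apply ex_plus; [apply ex_plus|]; apply ex_scal; apply ML; auto. }
    assert (HFmono := HFm). 
    destruct (HP s Hsm Hs01) as [Hsdv HPs]. destruct (HP F HFm HF01) as [HFdv HPF].
    set (d := fun t => s t - F t).
    assert (Hsint : ex_RInt s t0 tbar) by (apply Hone; auto).
    assert (Hd : ex_RInt d t0 tbar) by (apply ex_minus; auto).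
    set (Q := fun t => RInt d t0 t).
    assert (HQ : forall t, t0 <= t <= tbar -> payoff dv s t0 U0 t - payoff dv F t0 U0 t = Q t).
    { intros t Ht. unfold payoff, Q.
      assert (RInt (fun x => s x + dv x) t0 t - RInt (fun x => F x + dv x) t0 t = RInt d t0 t); [|lra].
      rewrite <- RI_minus by (apply Hsub; lra || auto).
      apply RI_ext; [lra|]. intros; unfold d; ring. }
    assert (HPsf : ex_RInt (fun t => payoff dv s t0 U0 t * f t) t0 tbar) by (apply ML; auto).
    assert (HPFf : ex_RInt (fun t => payoff dv F t0 U0 t * f t) t0 tbar) by (apply ML; auto).
    assert (HQf : ex_RInt (fun t => Q t * f t) t0 tbar).
    { apply (ex_ext (fun t => payoff dv s t0 U0 t * f t - payoff dv F t0 U0 t * f t)); auto.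
      intros t Ht. rewrite <- HQ by lra. ring. apply ex_minus; auto. }
    assert (Hdtf : ex_RInt (fun t => d t * (t * f t)) t0 tbar).
    { apply (ex_ext (fun t => s t * (t * f t) - F t * (t * f t))); auto.
      intros; unfold d; ring. apply ex_minus; apply ML; auto. }
    set (E := fun t => RInt f t0 t).
    assert (HE : forall t, t0 <= t <= tbar -> E t = F t - F t0).
    { intros t Ht. unfold E. rewrite (F_diff tbar F f Htbar HF t0 t); auto; lra. }
    assert (HdE : ex_RInt (fun t => d t * E t) t0 tbar).
    { apply (ex_ext (fun t => E t * d t)); auto. intros; ring. apply ML; auto.
      intros x y Hx Hxy Hy. rewrite !HE by lra. specialize (HFm x y Hx Hxy Hy). lra. }
    assert (HdF : ex_RInt (fun t => d t * F t) t0 tbar).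
    { apply (ex_ext (fun t => F t * d t)); auto. intros; ring. apply ML; auto. }
    assert (Hk2 := key2 d f t0 tbar 1 Mf Hab Hd Hfab).
    fold Q E in Hk2.
    assert (Hk2' : RInt (fun t => Q t * f t) t0 tbar = Q tbar * E tbar - RInt (fun t => d t * E t) t0 tbar).
    { apply Hk2; auto. intros t Ht. unfold d. specialize (Hs01 t Ht). specialize (HF01 t Ht). apply Rabs_le; lra. }
    assert (HEb : E tbar = 1 - F t0).
    { rewrite HE by lra. destruct HF as [_ [_ [_ H1]]]. lra. }
    assert (HdFE : RInt (fun t => d t * F t) t0 tbar = RInt (fun t => d t * E t) t0 tbar + F t0 * Q tbar).
    { unfold Q. rewrite <- RI_scal by auto. rewrite <- RI_plus by (auto; apply ex_scal; auto).
      apply RI_ext; auto. intros t Ht. rewrite HE by lra. ring. }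
    assert (HWdiff : welfare lam f v dv s t0 tbar U0 - welfare lam f v dv F t0 tbar U0
              = RInt (fun t => s t * Jf t) t0 tbar - RInt (fun t => F t * Jf t) t0 tbar).
    { unfold welfare, int_dF.
      rewrite <- RI_minus by (apply Hw; auto).
      rewrite <- RI_minus by (apply ML; auto).
      rewrite (RI_ext _ (fun t => lam * (d t * (t * f t)) + (1 - lam) * (Q t * f t)) t0 tbar).
      2: lra.
      2: { intros t Ht. rewrite <- HQ by lra. unfold price, d. ring. }
      rewrite (RI_ext (fun t => s t * Jf t - F t * Jf t)
                 (fun t => lam * (d t * (t * f t)) + (1 - lam) * (d t - d t * F t)) t0 tbar).
      2: lra.
      2: { intros t Ht. unfold Jf, d. ring. }
      rewrite !RI_plus by (try apply ex_scal; auto; try apply ex_minus; auto).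
      rewrite !RI_scal by (auto; try apply ex_minus; auto).
      rewrite RI_minus by auto.
      rewrite Hk2', HdFE, HEb. change (RInt d t0 tbar) with (Q tbar). ring. }
    pose proof (P1 s Hs). lra.
Qed.
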